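(* Let $k\ge 3$ and let $\mathfrak V$ be the subvariety of $\mathfrak B$ defined by the identity of right nilpotency $(\cdots((x_1x_2)x_3)\cdots)x_k=0$. Then for every $n\ge 2k-4$ the codimension satisfies $c_n(\mathfrak V)\ge d_{(n-k+2,k-2)}$, the degree of the irreducible $S_n$-character $\chi_{(n-k+2,k-2)}$; in particular $c_n(\mathfrak V)$ is bounded below by a polynomial in $n$ of degree $k-2$.
   Context: $K$ is a field of characteristic $0$. $\mathfrak B$ is the variety of bicommutative algebras, defined by the identities $(x_1x_2)x_3=(x_1x_3)x_2$ and $x_1(x_2x_3)=x_2(x_1x_3)$. For a variety $\mathfrak V$, $c_n(\mathfrak V)$ is the dimension of the space of multilinear elements of degree $n$ in $x_1,\dots,x_n$ in the relatively free algebra of $\mathfrak V$. $\chi_\lambda$ denotes the irreducible $S_n$-character indexed by the partition $\lambda\vdash n$ and $d_\lambda$ its degree. *)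

(* Defs.v *)
From HB Require Import structures.
From mathcomp Require Import all_boot all_order all_algebra.
Set Implicit Arguments. Unset Strict Implicit. Unset Printing Implicit Defensive.
Import GRing.Theory.

(* Nonassociative monomials: binary trees whose leaves are variables x_i   *)
(* (Leaf i stands for x_i, variables indexed from 0).                      *)
Inductive tree : Type := Leaf of nat | Node of tree & tree.

Fixpoint tree_eqb (t u : tree) : bool :=
  match t, u with
  | Leaf n, Leaf m => n == m
  | Node a b, Node c d => tree_eqb a c && tree_eqb b d
  | _, _ => false
  end.

Lemma tree_eqP : Equality.axiom tree_eqb.
Proof.
elim=> [n|a IHa b IHb] [m|c d] /=; try by constructor.
- by apply: (iffP eqP) => [->|[]].
- by case: IHa => [->|Hac]; case: IHb => [->|Hbd]; constructor => // -[].
Qed.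

HB.instance Definition _ := hasDecEq.Build tree tree_eqP.

Inductive ctx : Type := Hole | CL of ctx & tree | CR of tree & ctx.

Fixpoint plug (u : ctx) (t : tree) : tree :=
  match u with
  | Hole => t
  | CL c s => Node (plug c t) s
  | CR s c => Node s (plug c t)
  end.

Fixpoint subst (ms : seq tree) (t : tree) : tree :=
  match t with
  | Leaf i => nth (Leaf 0) ms i
  | Node a b => Node (subst ms a) (subst ms b)
  end.

Fixpoint trees_fuel (fuel : nat) (s : seq nat) : seq tree :=
  match fuel with
  | 0 => [::]
  | f.+1 =>
    match s with
    | [::] => [::]
    | [:: x] => [:: Leaf x]
    | _ => flatten [seq [seq Node a b | a <- trees_fuel f (take i s),
                                        b <- trees_fuel f (drop i s)]
                   | i <- iota 1 (size s).-1]
    end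
  end.
Definition trees_on (s : seq nat) : seq tree := trees_fuel (size s) s.

Fixpoint ctx_fuel (fuel : nat) (s : seq nat) : seq ctx :=
  match fuel with
  | 0 => [::]
  | f.+1 =>
    if s is [::] then [:: Hole] else
    flatten [seq [seq CL c t | c <- ctx_fuel f (take i s),
                               t <- trees_on (drop i s)]
            | i <- iota 0 (size s)]
    ++ flatten [seq [seq CR t c | t <- trees_on (take j s),
                                  c <- ctx_fuel f (drop j s)]
               | j <- iota 1 (size s)]
  end.
Definition ctx_on (s : seq nat) : seq ctx := ctx_fuel (size s).+1 s.

Fixpoint comps (m r : nat) : seq (seq nat) :=
  match r with
  | 0 => if m == 0 then [:: [::]] else [::]
  | r'.+1 => flatten [seq [seq i :: c | c <- comps (m - i) r'] | i <- iota 1 m]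
  end.

Definition choose_trees (bs : seq (seq nat)) : seq (seq tree) :=
  foldr (fun b acc => [seq t :: ts | t <- trees_on b, ts <- acc]) [:: [::]] bs.

(* The multilinear monomials of degree n in x_0, ..., x_(n-1): a basis of P_n *)
Definition mono (n : nat) : seq tree :=
  undup (flatten [seq trees_on p | p <- permutations (iota 0 n)]).

(* Nonassociative polynomials with integer coefficients (formal sums). *)
Definition ipoly := seq (int * tree).

Section Vec.
Variable K : fieldType.

(* coordinates of a monomial in P_n = K^(mono n) *)
Definition vecM (n : nat) (t : tree) : 'rV[K]_(size (mono n)) :=
  \row_(j < size (mono n)) ((nth (Leaf 0) (mono n) j == t)%:R)%R.

Definition polyvec (n : nat) (p : ipoly) : 'rV[K]_(size (mono n)) :=
  (\sum_(x <- p) (x.1)%:~R *: vecM n x.2)%R.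

Definition apply_id (u : ctx) (ms : seq tree) (f : ipoly) : ipoly :=
  [seq (x.1, plug u (subst ms x.2)) | x <- f].

(* all multilinear consequences of degree n of the multilinear identity f
   in r variables: u[f(m_1,...,m_r)], the variables of u, m_1, ..., m_r
   partitioning {x_0, ..., x_(n-1)}.  They span P_n \cap T-ideal(f). *)
Definition gens_of (n : nat) (f : ipoly) (r : nat) : seq 'rV[K]_(size (mono n)) :=
  flatten [seq
   flatten [seq
    flatten [seq
     flatten [seq [seq polyvec n (apply_id u ms f)
                  | ms <- choose_trees (reshape sz (drop c0 p))]
             | u <- ctx_on (take c0 p)]
    | sz <- comps (n - c0) r]
   | c0 <- iota 0 n.+1]
  | p <- permutations (iota 0 n)].
End Vec.

Definition idB1 : ipoly :=
  [:: (1%Z, Node (Node (Leaf 0) (Leaf 1)) (Leaf 2));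
      ((-1)%Z, Node (Node (Leaf 0) (Leaf 2)) (Leaf 1))].
Definition idB2 : ipoly :=
  [:: (1%Z, Node (Leaf 0) (Node (Leaf 1) (Leaf 2)));
      ((-1)%Z, Node (Leaf 1) (Node (Leaf 0) (Leaf 2)))].
Definition left_normed (k : nat) : tree :=
  foldl (fun t i => Node t (Leaf i)) (Leaf 0) (iota 1 k.-1).
Definition idRN (k : nat) : ipoly := [:: (1%Z, left_normed k)].

Definition idents (k : nat) : seq (ipoly * nat) :=
  [:: (idB1, 3); (idB2, 3); (idRN k, k)].

Definition TV (K : fieldType) (k n : nat) : {vspace 'rV[K]_(size (mono n))} :=
  << flatten [seq gens_of K n f.1 f.2 | f <- idents k] >>%VS.

Definition codim (K : fieldType) (k n : nat) : nat :=
  size (mono n) - \dim (TV K k n).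

(* Degree d_lambda of the irreducible S_n-character chi_lambda, via the
   hook length formula; lambda is given as a weakly decreasing seq of parts. *)
Definition hook_prod (la : seq nat) : nat :=
  \prod_(i < size la) \prod_(j < nth 0 la i)
     ((nth 0 la i - j) + (count (fun x => j < x) la - i) - 1).
Definition dim_irr (la : seq nat) : nat := (sumn la)`! %/ hook_prod la.

(* Main.v *)
Require Import Defs.
From HB Require Import structures.
From mathcomp Require Import all_boot all_order all_algebra.
From mathcomp Require Import zify.
Set Implicit Arguments. Unset Strict Implicit. Unset Printing Implicit Defensive.
Import GRing.Theory.

Fixpoint leaves (t : tree) : seq nat :=
  match t with Leaf i => [:: i] | Node a b => leaves a ++ leaves b end.

Lemma size_leaves t : 0 < size (leaves t).
Proof. elim: t => [//|a IHa b IHb /=]; rewrite size_cat; lia. Qed.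

Lemma trees_fuelS f s : 1 < size s ->
  trees_fuel f.+1 s = flatten [seq [seq Node a b | a <- trees_fuel f (take i s),
                                        b <- trees_fuel f (drop i s)]
                   | i <- iota 1 (size s).-1].
Proof. by case: s => [|x [|y s]]. Qed.

Lemma trees_fuel_sound f s t : t \in trees_fuel f s -> leaves t = s.
Proof.
elim: f s t => [//|f IH] s t.
case: (ltnP 1 (size s)) => Hs.
  rewrite trees_fuelS //.
  move/flatten_mapP => [i _ /allpairsP [[a b] /= [Ha Hb ->]]] /=.
  by rewrite (IH _ _ Ha) (IH _ _ Hb) cat_take_drop.
by case: s Hs => [|x [|y s]] //= _; rewrite inE => /eqP ->.
Qed.

Lemma trees_fuel_complete t f : size (leaves t) <= f -> t \in trees_fuel f (leaves t).
Proof.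
elim: t f => [i|a IHa b IHb] f Hs.
  by case: f Hs => [|f] //= _; rewrite inE.
have Ha := size_leaves a; have Hb := size_leaves b.
rewrite /= size_cat in Hs.
case: f Hs => [|f] Hs; first lia.
change (Node a b \in trees_fuel f.+1 (leaves a ++ leaves b)).
rewrite trees_fuelS ?size_cat; last lia.
apply/flatten_mapP; exists (size (leaves a)).
  rewrite mem_iota ?size_cat; lia.
apply/allpairsP; exists (a, b) => /=; split => //.
  by rewrite take_size_cat //; apply: IHa; lia.
by rewrite drop_size_cat //; apply: IHb; lia.
Qed.

Lemma mem_mono n t : (t \in mono n) = perm_eq (leaves t) (iota 0 n).
Proof.
rewrite mem_undup; apply/flatten_mapP/idP.
  by move=> [p]; rewrite mem_permutations => Hp /trees_fuel_sound ->.
move=> H; exists (leaves t); first by rewrite mem_permutations.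
exact: trees_fuel_complete.
Qed.

Lemma uniq_mono n : uniq (mono n).
Proof. exact: undup_uniq. Qed.

Definition V := (nat + (seq nat * seq nat))%type.
Definition msum (a b : seq nat) := sort leq (a ++ b).
Definition lam (v : V) : seq nat * seq nat :=
  match v with inl i => ([:: i], [::]) | inr p => p end.
Definition rho (v : V) : seq nat * seq nat :=
  match v with inl i => ([::], [:: i]) | inr p => p end.
Definition mul (u v : V) : V :=
  inr (msum (lam u).1 (rho v).1, msum (lam u).2 (rho v).2).
Fixpoint mval (t : tree) : V :=
  match t with Leaf i => inl i | Node a b => mul (mval a) (mval b) end.

Lemma msum_perm a b : perm_eq (msum a b) (a ++ b).
Proof. by rewrite /msum perm_sort. Qed.

Lemma msum_eq a b c d : perm_eq (a ++ b) (c ++ d) -> msum a b = msum c d.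
Proof.
move=> H; apply/perm_sortP => //; [exact: leq_total|exact: leq_trans|exact: anti_leq].
Qed.

Lemma msumAC a b c : msum (msum a b) c = msum (msum a c) b.
Proof.
apply: msum_eq.
rewrite (perm_trans (perm_cat (msum_perm a b) (perm_refl c))) //.
rewrite perm_sym (perm_trans (perm_cat (msum_perm a c) (perm_refl b))) //.
by rewrite -!catA perm_cat2l perm_catC.
Qed.

Lemma msumCA a b c : msum a (msum b c) = msum b (msum a c).
Proof.
apply: msum_eq.
rewrite (perm_trans (perm_cat (perm_refl a) (msum_perm b c))) //.
rewrite perm_sym (perm_trans (perm_cat (perm_refl b) (msum_perm a c))) //.
by rewrite !catA perm_cat2r perm_catC.
Qed.

Lemma mulAC a b c : mul (mul a b) c = mul (mul a c) b.
Proof. by rewrite /mul /= msumAC [msum (msum _ _) (rho b).2]msumAC. Qed.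

Lemma mulCA a b c : mul a (mul b c) = mul b (mul a c).
Proof. by rewrite /mul /= msumCA [msum _ (msum _ (rho c).2)]msumCA. Qed.

Fixpoint cval (u : ctx) (v : V) : V :=
  match u with
  | Hole => v
  | CL c t => mul (cval c v) (mval t)
  | CR t c => mul (mval t) (cval c v)
  end.

Lemma val_plug u s : mval (plug u s) = cval u (mval s).
Proof. by elim: u => //= [c -> t | t c ->]. Qed.

Fixpoint evalV (env : nat -> V) (t : tree) : V :=
  match t with Leaf i => env i | Node a b => mul (evalV env a) (evalV env b) end.

Lemma val_subst ms t : mval (subst ms t) = evalV (fun i => mval (nth (Leaf 0) ms i)) t.
Proof. by elim: t => //= a -> b ->. Qed.

Definition msz (v : V) := size (lam v).2.

Lemma size_msum a b : size (msum a b) = size a + size b.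
Proof. by rewrite (perm_size (msum_perm a b)) size_cat. Qed.

Lemma rho_ge v : msz v <= size (rho v).2.
Proof. by case: v. Qed.

Lemma msz_mul u v : msz (mul u v) = msz u + size (rho v).2.
Proof. by rewrite /msz /mul /= size_msum. Qed.

Lemma rho_pos t : 0 < size (rho (mval t)).2.
Proof. elim: t => //= a _ b IH; rewrite /mul /= size_msum; lia. Qed.

Lemma msz_cval u v : msz v <= msz (cval u v).
Proof.
elim: u => //= [c IH t | t c IH]; rewrite msz_mul.
  lia.
have := rho_ge (cval c v); lia.
Qed.

Lemma msz_foldl ms l t0 :
  size l + msz (mval t0) <= msz (mval (foldl (fun t i => Node t (nth (Leaf 0) ms i)) t0 l)).
Proof.
elim: l t0 => //= i l IH t0.
have := IH (Node t0 (nth (Leaf 0) ms i)); rewrite /= msz_mul.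
have := rho_pos (nth (Leaf 0) ms i); lia.
Qed.

Lemma subst_foldl ms l t0 :
  subst ms (foldl (fun t i => Node t (Leaf i)) t0 l) =
  foldl (fun t i => Node t (nth (Leaf 0) ms i)) (subst ms t0) l.
Proof. by elim: l t0 => //= i l IH t0; rewrite IH. Qed.

Lemma msz_ln k ms u : k.-1 <= msz (mval (plug u (subst ms (left_normed k)))).
Proof.
rewrite val_plug; apply: leq_trans (msz_cval _ _).
rewrite /left_normed subst_foldl.
apply: leq_trans (msz_foldl _ _ _); rewrite size_iota; lia.
Qed.

Lemma prod_sub a : \prod_(j < a) (a - j) = a`!.
Proof.
elim: a => [|a IH]; first by rewrite big_ord0.
rewrite big_ord_recl subn0 factS; congr (_ * _).
rewrite -IH; apply: eq_bigr => j _; by rewrite lift0 subSS.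
Qed.

Lemma hook_ge a b : b <= a -> a`! * b`! <= hook_prod [:: a; b].
Proof.
move=> Hab.
rewrite /hook_prod big_ord_recl big_ord_recl big_ord0 muln1 /=.
rewrite -(prod_sub a) -(prod_sub b).
apply: leq_mul; apply: leq_prod => j _.
  have := ltn_ord j; case: (j < b); lia.
have := ltn_ord j; rewrite /bump /=.
have -> : (j < a) = true by apply/idP; have := ltn_ord j; lia.
have -> : (j < b) = true by apply/idP; have := ltn_ord j; lia.
lia.
Qed.

Lemma dim_irr_le a b : b <= a -> dim_irr [:: a; b] <= 'C(a + b, b).
Proof.
move=> Hab; rewrite /dim_irr /= addn0.
have E := bin_fact (leq_addl a b).
rewrite addnK in E.
have -> : 'C(a + b, b) = (a + b)`! %/ (b`! * a`!).
  by rewrite -E mulnK // muln_gt0 !fact_gt0.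
apply: leq_div2l; first by rewrite muln_gt0 !fact_gt0.
by rewrite mulnC hook_ge.
Qed.

Lemma pow_ffact m n : 2 * m <= n -> n ^ m <= 2 ^ m * n ^_ m.
Proof.
elim: m => [|m IH] H; first by rewrite ffactn0.
rewrite expnSr ffactnSr expnS.
have := IH ltac:(lia).
set x := n ^ m; set y := n ^_ m; set z := 2 ^ m => Hxy.
have : x * n <= z * y * n by rewrite leq_mul2r Hxy orbT.
have : z * y * n <= 2 * z * (y * (n - m)).
  have -> : 2 * z * (y * (n - m)) = z * y * (2 * (n - m)).
    by rewrite !mulnA; congr (_ * _); rewrite mulnC mulnA mulnAC [y * z]mulnC.
  by rewrite leq_mul2l; apply/orP; right; lia.
lia.
Qed.

Definition core l r Rs := foldl (fun w b => Node w (Leaf b)) (Node (Leaf l) (Leaf r)) Rs.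
Definition build (L R : seq nat) : tree :=
  match L, R with
  | l :: Ls, r :: Rs => foldr (fun a w => Node (Leaf a) w) (core l r Rs) Ls
  | _, _ => Leaf 0
  end.

Lemma leaves_foldl w Rs :
  leaves (foldl (fun w b => Node w (Leaf b)) w Rs) = leaves w ++ Rs.
Proof. by elim: Rs w => [|b Rs IH] w /=; rewrite ?cats0 // IH -catA. Qed.

Lemma leaves_foldr w Ls :
  leaves (foldr (fun a w => Node (Leaf a) w) w Ls) = Ls ++ leaves w.
Proof. by elim: Ls => //= a Ls ->. Qed.

Lemma leaves_build l Ls r Rs :
  perm_eq (leaves (build (l :: Ls) (r :: Rs))) ((l :: Ls) ++ (r :: Rs)).
Proof.
rewrite /= leaves_foldr /core leaves_foldl /=.
by rewrite perm_sym -cat1s perm_catCA.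
Qed.

Lemma mval_foldl w p S Rs : mval w = inr p -> perm_eq p.2 S ->
  exists q, mval (foldl (fun w b => Node w (Leaf b)) w Rs) = inr q /\ perm_eq q.2 (S ++ Rs).
Proof.
elim: Rs w p S => [|b Rs IH] w p S Hw Hp /=.
  by exists p; rewrite cats0.
have := IH (Node w (Leaf b)) (msum p.1 [::], msum p.2 [:: b]) (rcons S b).
rewrite /= Hw => /(_ erefl) [].
  rewrite (perm_trans (msum_perm _ _)) // -cats1 perm_cat2r //.
move=> q [-> Hq]; exists q; split => //.
by rewrite (perm_trans Hq) // cat_rcons.
Qed.

Lemma mval_foldr w p Ls : mval w = inr p ->
  exists q, mval (foldr (fun a w => Node (Leaf a) w) w Ls) = inr q /\ perm_eq q.2 p.2.
Proof.
move=> Hw; elim: Ls => [|a Ls [q [Hq Hq2]]] /=.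
  by exists p.
rewrite Hq; eexists; split; first reflexivity.
by rewrite /= (perm_trans (msum_perm _ _)).
Qed.

Lemma mval_build l Ls r Rs :
  exists q, mval (build (l :: Ls) (r :: Rs)) = inr q /\ perm_eq q.2 (r :: Rs).
Proof.
have [q [Hq Hq2]] := mval_foldl Rs (w := Node (Leaf l) (Leaf r))
   (p := (msum [:: l] [::], msum [::] [:: r])) (S := [:: r]) erefl (msum_perm _ _).
have [q' [Hq' Hq2']] := mval_foldr Ls Hq.
by exists q'; split => //; rewrite (perm_trans Hq2').
Qed.

Section Sets.
Variable n : nat.

Definition LA (A : {set 'I_n}) := [seq val i | i <- enum (~: A)].
Definition RA (A : {set 'I_n}) := [seq val i | i <- enum A].
Definition btree A := build (LA A) (RA A).
Definition tauA A := mval (btree A).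

Lemma size_RA A : size (RA A) = #|A|.
Proof. by rewrite size_map -cardE. Qed.

Lemma size_LA A : size (LA A) = n - #|A|.
Proof. rewrite size_map -cardE; have E := cardsC A; rewrite card_ord in E; move: E; set c := #|~: A|; set d := #|A|; lia. Qed.

Lemma perm_LR A : perm_eq (LA A ++ RA A) (iota 0 n).
Proof.
rewrite -val_enum_ord /LA /RA -map_cat perm_map //.
apply: uniq_perm.
- rewrite cat_uniq !enum_uniq /= andbT.
  apply/hasPn => x; rewrite !mem_enum in_setC => ->; done.
- exact: enum_uniq.
- by move=> x; rewrite mem_cat !mem_enum in_setC orNb.
Qed.

Lemma btree_props (A : {set 'I_n}) : 0 < #|A| < n ->
  btree A \in mono n /\ exists q, tauA A = inr q /\ perm_eq q.2 (RA A).
Proof.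
move=> /andP [H1 H2].
have HL := size_LA A; have HR := size_RA A.
move: H1 H2 HL HR; set d := #|A| => H1 H2 HL HR.
rewrite /tauA /btree; split.
  rewrite mem_mono; apply: perm_trans (perm_LR A).
  case E1: (LA A) HL => [|l Ls] HL; first by move: HL => /= /esym; lia.
  case E2: (RA A) HR => [|r Rs] HR; first by move: HR => /= /esym; lia.
  exact: leaves_build.
case E1: (LA A) HL => [|l Ls] HL; first by move: HL => /= /esym; lia.
case E2: (RA A) HR => [|r Rs] HR; first by move: HR => /= /esym; lia.
exact: mval_build.
Qed.

Lemma msz_tauA (A : {set 'I_n}) : 0 < #|A| < n -> msz (tauA A) = #|A|.
Proof.
move=> /btree_props [_ [q [-> Hq]]].
by rewrite /msz /= (perm_size Hq) size_RA.
Qed.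

Lemma tauA_inj (A B : {set 'I_n}) : 0 < #|A| < n -> 0 < #|B| < n -> tauA A = tauA B -> A = B.
Proof.
move=> /btree_props [_ [q [-> Hq]]] /btree_props [_ [q' [-> Hq']]] [E].
subst q'.
have H : perm_eq (RA A) (RA B) by rewrite perm_sym in Hq; apply: perm_trans Hq Hq'.
apply/setP => i; move: (perm_mem H (val i)).
by rewrite /RA !(mem_map val_inj) !mem_enum.
Qed.

End Sets.

Lemma perm_leaves_plug u s s' : perm_eq (leaves s) (leaves s') ->
  perm_eq (leaves (plug u s)) (leaves (plug u s')).
Proof.
elim: u => //= [c IH t | t c IH] H.
  by rewrite perm_cat2r IH.
by rewrite perm_cat2l IH.
Qed.

Lemma mem_mono_perm n t t' : perm_eq (leaves t) (leaves t') ->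
  (t \in mono n) = (t' \in mono n).
Proof. by move=> H; rewrite !mem_mono; apply/idP/idP => H2; [rewrite perm_sym in H; exact: perm_trans H H2 | exact: perm_trans H H2]. Qed.

Section Phi.
Local Open Scope ring_scope.
Variables (K : fieldType) (n : nat).
Notation N := (size (mono n)).

Definition colt (tau : V) : 'cV[K]_N :=
  \col_(j < N) ((mval (nth (Leaf 0) (mono n) j) == tau)%:R).

Lemma sum_uniq (s : seq tree) (t : tree) (F : tree -> K) : uniq s ->
  \sum_(x <- s) (x == t)%:R * F x = (t \in s)%:R * F t.
Proof.
elim: s => [|x s IH] /=; first by rewrite big_nil mul0r.
move=> /andP [xs us]; rewrite big_cons IH // inE.
case: (x =P t) => [<-|/eqP ne] /=.
  by rewrite eqxx (negPf xs) /= mul0r addr0.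
by rewrite mul0r add0r eq_sym (negPf ne).
Qed.

Lemma vecM_col t tau :
  (vecM K n t *m colt tau) 0 0 = ((t \in mono n) && (mval t == tau))%:R.
Proof.
rewrite mxE.
under eq_bigr => j _ do rewrite !mxE.
rewrite -(big_mkord xpredT (fun j => (nth (Leaf 0) (mono n) j == t)%:R *
   (mval (nth (Leaf 0) (mono n) j) == tau)%:R)).
rewrite -(big_nth (Leaf 0) xpredT (fun x => (x == t)%:R * (mval x == tau)%:R)).
rewrite (sum_uniq _ (fun x => (mval x == tau)%:R) (uniq_mono n)).
by case: (t \in mono n); case: (mval t == tau); rewrite /= ?mul1r ?mul0r.
Qed.

Lemma polyvec_col p tau :
  (polyvec K n p *m colt tau) 0 0 =
  \sum_(x <- p) (x.1)%:~R * ((x.2 \in mono n) && (mval x.2 == tau))%:R.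
Proof.
elim: p => [|x p IH]; first by rewrite /polyvec !big_nil mul0mx mxE.
rewrite /polyvec !big_cons mulmxDl mxE -/(polyvec K n p) IH.
by rewrite -scalemxAl mxE vecM_col.
Qed.

Lemma flat_ex (S : Type) (T : eqType) (A : S -> seq T) s y :
  y \in flatten (map A s) -> exists x, y \in A x.
Proof.
elim: s => [//|x s IH] /=; rewrite mem_cat => /orP [H|/IH //].
by exists x.
Qed.

Lemma map_ex (S : Type) (T : eqType) (f : S -> T) s y :
  y \in map f s -> exists x, y = f x.
Proof.
elim: s => [//|x s IH] /=; rewrite inE => /orP [/eqP ->|/IH //].
by exists x.
Qed.

Lemma gens_ex f r g : g \in gens_of K n f r ->
  exists u ms, g = polyvec K n (apply_id u ms f).
Proof.
rewrite /gens_of => /flat_ex [p] /flat_ex [c0] /flat_ex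
  [sz] /flat_ex [u] /map_ex [ms ->].
by exists u, ms.
Qed.

Lemma vanish k tau : (msz tau < k.-1)%N ->
  forall g, g \in flatten [seq gens_of K n f.1 f.2 | f <- idents k] ->
  g *m colt tau = 0.
Proof.
move=> H g /flatten_mapP [[f r] fin] /gens_ex [u [ms ->]].
apply/matrixP => i j; rewrite !ord1 polyvec_col mxE.
move: fin; rewrite !inE => /or3P [/eqP [-> _]|/eqP [-> _]|/eqP [-> _]].
- rewrite /apply_id /= !big_cons big_nil /=.
  set A := plug u _; set B := plug u _.
  have E1 : (A \in mono n) = (B \in mono n).
    apply: mem_mono_perm; apply: perm_leaves_plug => /=.
    by rewrite -!catA perm_cat2l perm_catC.
  have E2 : mval A = mval B by rewrite !val_plug /= mulAC.
  by rewrite E1 E2 addr0 mul1r mulN1r subrr.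
- rewrite /apply_id /= !big_cons big_nil /=.
  set A := plug u _; set B := plug u _.
  have E1 : (A \in mono n) = (B \in mono n).
    apply: mem_mono_perm; apply: perm_leaves_plug => /=.
    by rewrite !catA perm_cat2r perm_catC.
  have E2 : mval A = mval B by rewrite !val_plug /= mulCA.
  by rewrite E1 E2 addr0 mul1r mulN1r subrr.
- rewrite /apply_id /= !big_cons big_nil /=.
  have -> : (mval (plug u (subst ms (left_normed k))) == tau) = false.
    apply/negbTE/eqP => E; have := msz_ln k ms u; rewrite E; lia.
  by rewrite andbF mulr0 addr0.
Qed.

End Phi.
Section CG.
Local Open Scope ring_scope.

Lemma codim_ge (K : fieldType) (k n : nat) : (3 <= k -> k - 1 <= n -> 'C(n, k - 2) <= codim K k n)%N.
Proof.
move=> Hk Hn.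
pose m := (k - 2)%N.
pose S := [set A : {set 'I_n} | #|A| == m].
have HS : forall A, A \in S -> (0 < #|A| < n)%N.
  by move=> A; rewrite inE => /eqP ->; rewrite /m; lia.
pose N := size (mono n).
pose X := [seq vecM K n (btree A) | A <- enum S].
pose M : 'M[K]_N := (\sum_(A in S) colt K n (tauA A) *m vecM K n (btree A))%R.
have colv : forall A B, A \in S -> B \in S ->
    vecM K n (btree B) *m colt K n (tauA A) = (((A == B)%:R)%:M)%R.
  move=> A B AS BS; rewrite [LHS]mx11_scalar vecM_col.
  have [-> _] := btree_props (HS B BS).
  have -> // : (mval (btree B) == tauA A) = (A == B).
  apply/idP/idP => /eqP E.
    by apply/eqP; apply: (tauA_inj (HS A AS) (HS B BS)); rewrite -E.
  by rewrite E.
have XM : forall B, B \in S -> vecM K n (btree B) *m M = vecM K n (btree B).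
  move=> B BS; rewrite mulmx_sumr (bigD1 B) //= mulmxA colv // eqxx.
  rewrite mul_scalar_mx scale1r big1 ?addr0 // => A /andP [AS nAB].
  by rewrite mulmxA colv // (negPf nAB) mul_scalar_mx scale0r.
have GM : forall g, g \in flatten [seq gens_of K n f.1 f.2 | f <- idents k] ->
    (g *m M = 0)%R.
  move=> g Hg; rewrite mulmx_sumr big1 // => A AS.
  rewrite mulmxA (vanish _ Hg) ?mul0mx //.
  rewrite msz_tauA; last exact: HS.
  by move: AS; rewrite inE => /eqP ->; rewrite /m; lia.
have Xfree : free X.
  have : free (in_tuple X); last by [].
  apply/freeP => c Hc i.
  have Hi : (i < size (enum S))%N by rewrite -(size_map (fun A => vecM K n (btree A))).
  pose B := nth set0 (enum S) i.
  have BS : B \in S by rewrite -mem_enum mem_nth.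
  have Xi : forall j, (j < size (enum S))%N ->
      nth (0 : 'rV[K]_N) X j = vecM K n (btree (nth set0 (enum S) j)).
    by move=> j Hj; rewrite /X (nth_map set0).
  have := congr1 (fun v => (v *m colt K n (tauA B)) 0 0) Hc.
  rewrite mulmx_suml mul0mx summxE mxE (bigD1 i) // big1 ?Monoid.mulm1.
    by rewrite -scalemxAl mxE Xi // colv // {1}/B eqxx mxE eqxx mulr1n mulr1.
  move=> j /andP [_ nji].
  have Hj : (j < size (enum S))%N by rewrite -(size_map (fun A => vecM K n (btree A))).
  have BjS : nth set0 (enum S) j \in S by rewrite -mem_enum mem_nth.
  rewrite -scalemxAl mxE Xi // colv //.
  have E : (B == nth set0 (enum S) j) = false.
    apply/negbTE; apply: contra nji => /eqP E.
    apply/eqP/val_inj; apply/eqP.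
    by rewrite -(nth_uniq set0 Hj Hi (enum_uniq _)); apply/eqP; rewrite -E.
  by rewrite E mxE mulr0n mulr0.
pose F : 'End('rV[K]_N) := linfun (mulmxr M).
have H1 : (TV K k n <= lker F)%VS.
  apply/span_subvP => g Hg; rewrite memv_ker lfunE; apply/eqP; exact: GM.
have H2 : (<<X>> <= limg F)%VS.
  apply/span_subvP => v /mapP [B BS ->].
  rewrite -(XM B); last by rewrite -mem_enum.
  have -> : vecM K n (btree B) *m M = F (vecM K n (btree B)) by rewrite lfunE.
  exact: memv_img (memvf _).
have H3 := limg_ker_dim F fullv.
rewrite capfv in H3.
have Hd : \dim (fullv : {vspace 'rV[K]_N}) = N.
  by rewrite dimvf /dim /= mul1n.
have Hx : \dim <<X>> = size X := eqP Xfree.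
have Hs : size X = 'C(n, k - 2) by rewrite size_map -cardE card_draws card_ord.
have := dimvS H1; have := dimvS H2.
rewrite /codim -/N Hx Hs.
move: H3; rewrite Hd.
set a := \dim (lker F); set b := \dim (limg F); set c := \dim (TV K k n).
lia.
Qed.

End CG.

Theorem mainTheorem3 (K : fieldType) (k : nat) :
  ([pchar K] =i pred0)%R -> 3 <= k ->
  (forall n : nat, 2 * k - 4 <= n ->
     dim_irr [:: n + 2 - k; k - 2] <= codim K k n)
  /\ (exists C N : nat, 0 < C /\
        forall n : nat, N <= n -> n ^ (k - 2) <= C * codim K k n).
Proof.
move=> _ Hk; split.
  move=> n Hn.
  have Hb : k - 2 <= n + 2 - k by lia.
  apply: leq_trans (dim_irr_le Hb) _.
  have -> : n + 2 - k + (k - 2) = n by lia.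
  apply: codim_ge => //; lia.
exists (2 ^ (k - 2) * (k - 2)`!), (2 * (k - 2) + 1); split.
  by rewrite muln_gt0 expn_gt0 fact_gt0.
move=> n Hn.
apply: leq_trans (pow_ffact (m := k - 2) (n := n) ltac:(lia)) _.
rewrite -bin_ffact -mulnA leq_mul2l; apply/orP; right.
rewrite mulnC leq_mul2l; apply/orP; right.
apply: codim_ge => //; lia.
Qed.
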